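(* Let $k\ge1$, $d\ge1$ and $n_1,\dots,n_k\ge2$ be integers and $n:=n_1\cdots n_k$. There exists a $\Sigma_k(n_1,\dots,n_k)$-equivariant (continuous) map \[ C_k(d;n_1,\dots,n_k)\longrightarrow F(\mathbb{R}^d,n), \] where $\Sigma_k(n_1,\dots,n_k)$ acts on $F(\mathbb{R}^d,n)$ via the inclusion $\Sigma_k(n_1,\dots,n_k)\subseteq S_n$.
   Context: $F(\mathbb{R}^d,m)$ is the configuration space of $m$ pairwise distinct points in $\mathbb{R}^d$ with $S_m$ acting by $\tau\cdot(y_1,\dots,y_m)=(y_{\tau^{-1}(1)},\dots,y_{\tau^{-1}(m)})$. Wreath product action: if $G$ acts on $X$ and $S_m$ on $Y$, $G^{\times m}\rtimes S_m$ ($S_m$ permuting factors) acts on $X^{\times m}\times Y$ by $(g_1,\dots,g_m;\sigma)\cdot(x_1,\dots,x_m;y)=(g_1x_{\sigma^{-1}(1)},\dots,g_mx_{\sigma^{-1}(m)};\sigma y)$. $\Sigma_1(n_1)=S_{n_1}$, $\Sigma_k(n_1,\dots,n_k)=\Sigma_{k-1}(n_1,\dots,n_{k-1})^{\times n_k}\rtimes S_{n_k}$. $C_1(d;n_1)=F(\mathbb{R}^d,n_1)$, $C_k(d;n_1,\dots,n_k)=C_{k-1}(d;n_1,\dots,n_{k-1})^{\times n_k}\times F(\mathbb{R}^d,n_k)$ with the inductively defined wreath product action. Inclusion $\Sigma_k(n_1,\dots,n_k)\subseteq S_n$ (as the automorphisms of the rooted tree permuting its $n$ leaves): for $k=1$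 it is the identity; for $k\ge2$, with $n'=n_1\cdots n_{k-1}$, identify $[n]$ with $[n']\times[n_k]$ via $(i,j)\leftrightarrow(j-1)n'+i$, and let $(\Sigma_1,\dots,\Sigma_{n_k};\sigma)$ act by $(i,j)\mapsto(\Sigma_{\sigma(j)}(i),\sigma(j))$, where each $\Sigma_l\in\Sigma_{k-1}(n_1,\dots,n_{k-1})\subseteq S_{n'}$ inductively. *)

(* Defs.v *)
From HB Require Import structures.
From mathcomp Require Import all_boot all_order all_algebra all_fingroup.
From mathcomp Require Import all_classical all_reals all_analysis.
Set Implicit Arguments. Unset Strict Implicit. Unset Printing Implicit Defensive.
Import Order.TTheory GRing.Theory Num.Theory.
Import numFieldNormedType.Exports.

(* A list [rs] = [:: n_k; ...; n_1] (REVERSED order, outermost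
   level first) describes the iterated wreath product.  The empty list is
   level 0: Sigma_0 = trivial group, C_0 = a point (0 points in R^d), one leaf.
   Points are indexed from 0. *)

Fixpoint Npts (rs : seq nat) : nat :=
  match rs with [::] => 0%N | m :: rs' => (Npts rs' * m + m)%N end.

Fixpoint nleaves (rs : seq nat) : nat :=
  match rs with [::] => 1%N | m :: rs' => (nleaves rs' * m)%N end.

(* Elements of Sigma_k = Sigma_{k-1}^{n_k} x| S_{n_k}  (Sigma_0 = unit). *)
Fixpoint Sig (rs : seq nat) : Type :=
  match rs with [::] => unit | m :: rs' => (('I_m -> Sig rs') * 'S_m)%type end.

(* Forward map on point indices of C_k describing the action:
   (g . x)_{posmap g p} = x_p. Block j occupies positions
   [j N', (j+1) N'), the last block occupies [m N', m N' + m). *)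
Fixpoint posmap (rs : seq nat) : Sig rs -> nat -> nat :=
  match rs return Sig rs -> nat -> nat with
  | [::] => fun _ p => p
  | m :: rs' => fun g p =>
      let N' := Npts rs' in
      if (p < N' * m)%N then
        match (insub (p %/ N')%N : option 'I_m) with
        | Some j => let l := g.2 j in (l * N' + posmap (g.1 l) (p %% N'))%N
        | None => p end
      else
        match (insub (p - N' * m)%N : option 'I_m) with
        | Some i => (N' * m + g.2 i)%N
        | None => p end
  end.

(* The inclusion Sigma_k <= S_n as the permutation of leaves (forward map):
   leaf (i, j) <-> j n' + i (0-indexed) is sent to
   (iota(g_{s(j)}) i, s(j)). *)
Fixpoint leafmap (rs : seq nat) : Sig rs -> nat -> nat :=
  match rs return Sig rs -> nat -> nat with
  | [::] => fun _ p => p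
  | m :: rs' => fun g p =>
      let n' := nleaves rs' in
      match (insub (p %/ n')%N : option 'I_m) with
      | Some j => let l := g.2 j in (l * n' + leafmap (g.1 l) (p %% n'))%N
      | None => p end
  end.

(* Row p of a matrix (0 if out of range). *)
Definition rowat (R : nzRingType) (N d : nat) (x : 'M[R]_(N, d)) (p : nat)
  : 'rV[R]_d :=
  match (insub p : option 'I_N) with Some p' => row p' x | None => 0 end.

Definition inF (T : Type) (m : nat) (pts : nat -> T) : Prop :=
  forall i j, (i < m)%N -> (j < m)%N -> pts i = pts j -> i = j.

Fixpoint inC (T : Type) (rs : seq nat) (pts : nat -> T) : Prop :=
  match rs with
  | [::] => True
  | m :: rs' =>
      (forall j, (j < m)%N -> inC rs' (fun i => pts (j * Npts rs' + i)%N))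
      /\ inF m (fun i => pts (Npts rs' * m + i)%N)
  end.

Definition Cspace (R : realType) (d : nat) (rs : seq nat)
  : set 'M[R]_(Npts rs, d) := [set x | inC rs (rowat x)].
Arguments Cspace : clear implicits.

(* Main.v *)
Require Import Defs.
From HB Require Import structures.
From mathcomp Require Import all_boot all_order all_algebra all_fingroup.
From mathcomp Require Import all_classical all_reals all_analysis.
From mathcomp Require Import zify.
Import Order.TTheory GRing.Theory Num.Theory.
Import numFieldNormedType.Exports.
Local Open Scope classical_set_scope.
Local Open Scope ring_scope.

Lemma lt_blk l m r n' : (l < m -> r < n' -> l * n' + r < n' * m)%N.
Proof. nia. Qed.

Lemma split_idx n' m q : (q < n' * m)%N ->
  [/\ (0 < n')%N, (q %/ n' < m)%N, (q %% n' < n')%N & q = (q %/ n' * n' + q %% n')%N].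
Proof.
move=> h; have n0 : (0 < n')%N by case: n' h => //; rewrite mul0n.
split => //; first by rewrite ltn_divLR // mulnC.
  by rewrite ltn_pmod.
exact: divn_eq.
Qed.

Lemma leafmap_lt rs (g : Sig rs) q :
  (q < nleaves rs)%N -> (leafmap g q < nleaves rs)%N.
Proof.
elim: rs g q => [|m rs IH] g q //= h.
have [n0 jm im e] := @split_idx _ _ _ h.
case: insubP => [j _ vj|]; last by rewrite jm.
exact: (@lt_blk _ _ _ _ (ltn_ord _) (IH _ _ im)).
Qed.

Lemma posmap_last m rs (g : Sig (m :: rs)) (j : 'I_m) :
  posmap g (Npts rs * m + j)%N = (Npts rs * m + g.2 j)%N.
Proof.
rewrite /= ltnNge leq_addr /= addKn.
case: insubP => [i _ vi|]; last by rewrite ltn_ord.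
by congr (_ + nat_of_ord (g.2 _))%N; apply: val_inj.
Qed.

Lemma posmap_blk m rs (g : Sig (m :: rs)) (j : 'I_m) p : (p < Npts rs)%N ->
  posmap g (j * Npts rs + p)%N = (g.2 j * Npts rs + posmap (g.1 (g.2 j)) p)%N.
Proof.
move=> hp; have n0 : (0 < Npts rs)%N by case: (Npts rs) hp.
rewrite /= (@lt_blk _ _ _ _ (ltn_ord j) hp) divnMDl // divn_small // addn0.
rewrite modnMDl modn_small //.
case: insubP => [i _ vi|]; last by rewrite ltn_ord.
by have -> : i = j by apply: val_inj.
Qed.

Section Constr.
Variables (R : realType) (d : nat).
Notation V := 'rV[R]_d.

Definition phi (z : V) : V := (1 + `|z|)^-1 *: z.
Definition cf (m : nat) (y : nat -> V) : R :=
  \prod_(a < m) \prod_(b < m | a != b) Num.min 1 `|y a - y b|.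

Lemma phi_lt1 z : `|phi z| < 1.
Proof.
have h : 0 < 1 + `|z| by rewrite ltr_pwDl.
rewrite /phi normrZ ger0_norm ?invr_ge0 ?ltW // mulrC ltr_pdivrMr //.
by rewrite mul1r ltrDr.
Qed.

Lemma phi_inj : injective phi.
Proof.
move=> a b E.
have ha : 0 < 1 + `|a| by rewrite ltr_pwDl.
have hb : 0 < 1 + `|b| by rewrite ltr_pwDl.
have Na : `|phi a| = `|a| / (1 + `|a|).
  by rewrite /phi normrZ ger0_norm ?invr_ge0 ?ltW // mulrC.
have Nb : `|phi b| = `|b| / (1 + `|b|).
  by rewrite /phi normrZ ger0_norm ?invr_ge0 ?ltW // mulrC.
have Eab : `|a| = `|b|.
  have := congr1 (fun v => `|v|) E; rewrite /= Na Nb.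
  move/eqP; rewrite eqr_div; [|by rewrite gt_eqF|by rewrite gt_eqF] => /eqP.
  rewrite !mulrDr !mulr1 [`|a| * _]mulrC => /addIr //.
have -> : a = (1 + `|a|) *: phi a by rewrite /phi scalerA divff ?gt_eqF // scale1r.
by rewrite E Eab /phi scalerA divff ?gt_eqF // scale1r.
Qed.

Lemma prod_le_term (I : finType) (P : pred I) (G : I -> R) i0 :
  (forall i, 0 <= G i <= 1) -> P i0 -> \prod_(i | P i) G i <= G i0.
Proof.
move=> HG Pi0; rewrite (bigD1 i0) //=.
apply: ler_piMr; first by case/andP: (HG i0).
by apply: prodr_ile1 => i _; exact: HG.
Qed.

Lemma minG01 (r : R) : 0 <= r -> 0 <= Num.min 1 r <= 1.
Proof. by move=> r0; rewrite le_min ler01 r0 ge_min lexx. Qed.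

Lemma cf_le m (y : nat -> V) (a b : 'I_m) : a != b -> cf m y <= `|y a - y b|.
Proof.
move=> ab; rewrite /cf.
have h1 := @prod_le_term 'I_m xpredT
  (fun i : 'I_m => \prod_(j < m | i != j) Num.min 1 `|y i - y j|) a.
apply: (le_trans (h1 _ _)) => //.
  move=> i; apply/andP; split.
    by apply: prodr_ge0 => j _; case/andP: (@minG01 _ (normr_ge0 (y i - y j))).
  by apply: prodr_ile1 => j _; apply: minG01.
have h2 := @prod_le_term 'I_m (fun j : 'I_m => a != j)
  (fun j : 'I_m => Num.min 1 `|y a - y j|) b.
apply: (le_trans (h2 _ _)) => //.
  by move=> j; apply: minG01.
by rewrite ge_min lexx orbT.
Qed.

Lemma cf_gt0 m (y : nat -> V) : (forall a b : 'I_m, a != b -> y a != y b) -> 0 < cf m y.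
Proof.
move=> H; apply: prodr_gt0 => a _; apply: prodr_gt0 => b ab.
by rewrite lt_min ltr01 normr_gt0 subr_eq0 H.
Qed.

Lemma cf_perm m (s : 'S_m) (y y' : nat -> V) :
  (forall a : 'I_m, y' (s a) = y a) -> cf m y' = cf m y.
Proof.
move=> H; rewrite /cf (reindex_inj (@perm_inj _ s)) /=.
apply: eq_bigr => a _.
rewrite (reindex_inj (@perm_inj _ s)) /=.
apply: eq_big => [b|b _]; first by rewrite (inj_eq (@perm_inj _ s)).
by rewrite !H.
Qed.


Fixpoint Fm (rs : seq nat) (pts : nat -> V) : nat -> V :=
  match rs with
  | [::] => fun _ => 0
  | m :: rs' => fun q =>
     pts (Npts rs' * m + q %/ nleaves rs')%N
     + (cf m (fun a => pts (Npts rs' * m + a)%N) / 2) *: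
        phi (Fm rs' (fun i => pts (q %/ nleaves rs' * Npts rs' + i)%N)
                    (q %% nleaves rs'))
  end.

Lemma Fm_inF rs : forall pts, inC rs pts -> inF (nleaves rs) (Fm rs pts).
Proof.
elim: rs => [|m rs IH] pts /=.
  by move=> _ i j; rewrite !ltnS !leqn0 => /eqP-> /eqP->.
case=> Hblk Hlast q1 q2 h1 h2.
have [n0 j1m i1n e1] := @split_idx _ _ _ h1.
have [_ j2m i2n e2] := @split_idx _ _ _ h2.
set Y := fun a => pts (Npts rs * m + a)%N.
have cpos : 0 < cf m Y.
  apply: cf_gt0 => a b ab; apply/eqP => E; move: ab.
  by rewrite -(inj_eq val_inj) /= (Hlast a b (ltn_ord a) (ltn_ord b) E) eqxx.
have c0 : cf m Y / 2 != 0 by rewrite gt_eqF // divr_gt0.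
rewrite -/Y => E.
case: (eqVneq (q1 %/ nleaves rs)%N (q2 %/ nleaves rs)%N) => [ej|nej].
  rewrite /Y ej in E; move/addrI: E => /(scalerI c0) /phi_inj E.
  have Ei := IH _ (Hblk _ j2m) _ _ i1n i2n E.
  by rewrite [q1]e1 [q2]e2 ej Ei.
exfalso.
set c := cf m Y / 2 in E c0.
set p1 := phi _ in E; set p2 := phi _ in E.
have E2 : Y (q1 %/ nleaves rs)%N - Y (q2 %/ nleaves rs)%N = c *: (p2 - p1).
  apply/eqP; rewrite subr_eq scalerBr addrC addrA; apply/eqP.
  by rewrite -E addrK.
have H1 : `|Y (q1 %/ nleaves rs)%N - Y (q2 %/ nleaves rs)%N| < cf m Y.
  rewrite E2 normrZ ger0_norm ?divr_ge0 ?ltW //.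
  apply: (le_lt_trans (ler_wpM2l _ (ler_normB _ _))); first by rewrite divr_ge0 ?ltW.
  have -> : cf m Y = cf m Y / 2 * 2 by rewrite divfK.
  rewrite ltr_pM2l ?divr_gt0 //.
  by have := ltrD (phi_lt1 (Fm rs (fun i => pts (q2 %/ nleaves rs * Npts rs + i)%N) (q2 %% nleaves rs)%N)) (phi_lt1 (Fm rs (fun i => pts (q1 %/ nleaves rs * Npts rs + i)%N) (q1 %% nleaves rs)%N)).
have nej' : Ordinal j1m != Ordinal j2m by rewrite -(inj_eq val_inj).
have H2 := @cf_le m Y (Ordinal j1m) (Ordinal j2m) nej'.
by have := lt_le_trans H1 H2; rewrite ltxx.
Qed.


Lemma Fm_equiv rs : forall (g : Sig rs) (pts pts' : nat -> V),
  (forall p, (p < Npts rs)%N -> pts' (posmap g p) = pts p) ->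
  forall q, (q < nleaves rs)%N -> Fm rs pts' (leafmap g q) = Fm rs pts q.
Proof.
elim: rs => [|m rs IH] g pts pts' H q hq //=.
have [n0 jm im e] := @split_idx _ _ _ hq.
case: insubP => [j _ vj|]; last by rewrite jm.
have hl := @leafmap_lt _ (g.1 (g.2 j)) _ im.
rewrite divnMDl // divn_small // addn0 modnMDl modn_small // -vj.
have HY : forall a : 'I_m, pts' (Npts rs * m + g.2 a)%N = pts (Npts rs * m + a)%N.
  move=> a; rewrite -posmap_last; apply: H.
  by rewrite /= ltn_add2l ltn_ord.
rewrite HY (@cf_perm m g.2 (fun a => pts (Npts rs * m + a)%N) (fun a => pts' (Npts rs * m + a)%N) HY).
congr (_ + _ *: phi _).
apply: (IH _ _ _ _ _ im) => p hp.
rewrite -posmap_blk //; apply: H.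
by rewrite /= (leq_trans (@lt_blk _ _ _ _ (ltn_ord j) hp)) // leq_addr.
Qed.

Lemma phi_cont : continuous phi.
Proof.
move=> z; apply: (@continuousZ _ _ _ (fun z : V => (1 + `|z|)^-1) id z); last exact: cvg_id.
apply: continuousV; first by rewrite gt_eqF // ltr_pwDl.
apply: continuousD; first exact: cst_continuous.
exact: norm_continuous.
Qed.

Lemma prod_cont (T : topologicalType) (I : Type) (r : seq I) (P : pred I)
  (G : I -> T -> R) : (forall i, continuous (G i)) ->
  continuous (fun t => \prod_(i <- r | P i) G i t).
Proof.
move=> HG; elim: r => [|a r IH].
  under eq_fun do rewrite big_nil; exact: cst_continuous.
under eq_fun do rewrite big_cons.
case: (P a) => /=; last exact: IH.
by move=> t; apply: continuousM; [exact: HG|exact: IH].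
Qed.

Lemma contD' (T : topologicalType) (f g : T -> V) x :
  {for x, continuous f} -> {for x, continuous g} ->
  {for x, continuous (fun t => f t + g t)}.
Proof. exact: continuousD. Qed.

Lemma contZ' (T : topologicalType) (s : T -> R) (f : T -> V) x :
  {for x, continuous s} -> {for x, continuous f} ->
  {for x, continuous (fun t => s t *: f t)}.
Proof. exact: continuousZ. Qed.

Lemma contM' (T : topologicalType) (s u : T -> R) x :
  {for x, continuous s} -> {for x, continuous u} ->
  {for x, continuous (fun t => s t * u t)}.
Proof. exact: continuousM. Qed.

Lemma Fm_cont rs : forall (T : topologicalType) (P : T -> nat -> V),
  (forall p, continuous (fun t => P t p)) ->
  forall q, continuous (fun t => Fm rs (P t) q).
Proof.
elim: rs => [|m rs IH] T P HP q /=; first exact: cst_continuous.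
move=> t; refine (@contD' T _ _ t _ _); first exact: HP.
apply: contZ'.
  apply: contM'; last exact: cst_continuous.
  apply: prod_cont => a; apply: prod_cont => b.
  move=> u; apply: (@continuous_min R T (fun _ => 1) (fun t => `|P t (Npts rs * m + a)%N - P t (Npts rs * m + b)%N|)).
    exact: cst_continuous.
  apply: (@continuous_comp _ _ _ (fun t => P t (Npts rs * m + a)%N - P t (Npts rs * m + b)%N) Num.norm).
    by apply: continuousB; [exact: HP|exact: HP].
  exact: norm_continuous.
apply: (@continuous_comp _ _ _ _ phi); last exact: phi_cont.
by apply: (IH _ (fun t i => P t (q %/ nleaves rs * Npts rs + i)%N)) => p; exact: HP.
Qed.

End Constr.

Lemma nleaves_prod rs : nleaves rs = (\prod_(m <- rs) m)%N.
Proof. elim: rs => [|m rs IH] /=; first by rewrite big_nil. by rewrite big_cons IH mulnC. Qed.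

Lemma mx_cont (R : realType) (T : topologicalType) m n (f : T -> 'M[R]_(m,n)) :
  (forall i j, continuous (fun t => f t i j)) -> continuous f.
Proof.
move=> H t; apply/cvg_mx_entourageP => A entA.
apply: filter_forall => i; apply: filter_forall => j.
have := H i j t.
move/cvg_entourageP => /(_ _ entA).
move=> HH; apply: (@filterS _ (nbhs t) _ _ _ _ HH) => s /=; by rewrite inE.
Qed.

Lemma rowat_cont (R : realType) N d p :
  continuous (fun x : 'M[R]_(N, d) => rowat x p).
Proof.
rewrite /rowat; case: (insub p) => [p'|]; last exact: cst_continuous.
apply: mx_cont => a b.
under eq_fun do rewrite mxE.
exact: coord_continuous.
Qed.

Theorem lemma4p3 (R : realType) (d : nat) (ns : seq nat) :
  (1 <= size ns)%N -> (1 <= d)%N -> all (fun m => 2 <= m)%N ns ->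
  exists f : 'M[R]_(Npts (rev ns), d) -> 'M[R]_(\prod_(m <- ns) m, d),
    {within Cspace R d (rev ns), continuous f} /\
    (forall x, Cspace R d (rev ns) x ->
       inF (\prod_(m <- ns) m)%N (rowat (f x))) /\
    (forall (g : Sig (rev ns)) (x y : 'M[R]_(Npts (rev ns), d)),
       Cspace R d (rev ns) x ->
       (forall p, (p < Npts (rev ns))%N -> rowat y (posmap g p) = rowat x p) ->
       forall q, (q < \prod_(m <- ns) m)%N ->
         rowat (f y) (leafmap g q) = rowat (f x) q).
Proof.
move=> _ _ _.
have hN : nleaves (rev ns) = (\prod_(m <- ns) m)%N by rewrite nleaves_prod big_rev.
pose f := fun x : 'M[R]_(Npts (rev ns), d) =>
  \matrix_(q < \prod_(m <- ns) m, k < d) Fm R d (rev ns) (rowat x) q 0 k.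
have rowf : forall x q, (q < \prod_(m <- ns) m)%N ->
    rowat (f x) q = Fm R d (rev ns) (rowat x) q.
  move=> x q hq; rewrite /rowat; case: insubP => [q' _ vq|]; last by rewrite hq.
  by apply/rowP => k; rewrite !mxE vq.
exists f; split; [|split].
- apply: continuous_subspaceT; apply: mx_cont => i j.
  under eq_fun do rewrite mxE.
  have HF : continuous (fun t : 'M[R]_(Npts (rev ns), d) => Fm R d (rev ns) (rowat t) i).
    by apply: (@Fm_cont R d) => p; exact: rowat_cont.
  move=> t.
  exact: (@continuous_comp _ _ _ (fun t : 'M[R]_(Npts (rev ns), d) => Fm R d (rev ns) (rowat t) i)
            (fun v : 'rV[R]_d => v 0 j) t (HF t) (@coord_continuous R 1 d 0 j _)).
- move=> x Cx i j hi hj; rewrite !rowf //.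
  by apply: (@Fm_inF R d); rewrite ?hN.
- move=> g x y _ H q hq.
  have hl : (leafmap g q < \prod_(m <- ns) m)%N by rewrite -hN leafmap_lt ?hN.
  rewrite (rowf y _ hl) (rowf x _ hq).
  apply: (@Fm_equiv R d (rev ns) g (rowat x) (rowat y) H).
  by rewrite hN.
Qed.
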